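(* The functions $\mu\mapsto\Pi(D^\mu,C^\mu)$ and $\mu\mapsto G(D^\mu,C^\mu)$ are non-increasing on $[0,\infty)$.
   Context: Let $(X,Y)\sim P_{XY}$ on $\mathcal X\times\mathcal Y$, $\alpha\in(0,1)$. $\mathcal I$ is a finite collection of subsets of $\mathcal Y$ enumerated in a fixed lexicographic order, $w:\mathcal I\to(0,B)$ a bounded positive weight. For $C\in\mathcal I$ let $p_C(x)=\mathbb P(Y\in C\mid X=x)$, $\ell_{x,C}(\mu)=w(C)p_C(x)+\mu(p_C(x)-(1-\alpha))$ for $\mu\ge0$, $\mathcal U_x(\mu)=\max_{C\in\mathcal I}\ell_{x,C}(\mu)$. $C^\mu(x)$ is a maximizer of $\ell_{x,C}(\mu)$ over $C\in\mathcal I$, ties broken in favor of the largest $w(C)$ and then smallest index; $D^\mu(x)=\mathbb 1\{\mathcal U_x(\mu)\ge0\}$. For $D:\mathcal X\to\{0,1\}$, $C:\mathcal X\to\mathcal I$: $\Pi(D,C)=\mathbb E[w(C(X))p_{C(X)}(X)D(X)]$, $G(D,C)=\mathbb E[(1-p_{C(X)}(X)-\alpha)D(X)]$. *)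

(* Defs.v *)
From HB Require Import structures.
From mathcomp Require Import all_boot all_order all_algebra.
From mathcomp Require Import all_classical all_reals all_analysis.
Set Implicit Arguments. Unset Strict Implicit. Unset Printing Implicit Defensive.
Import Order.TTheory GRing.Theory Num.Theory.
Local Open Scope ring_scope.

Section Defs.
Context {d1 : measure_display} {X : measurableType d1} {R : realType}.
Context (n : nat) (w : 'I_n.+1 -> R) (p : 'I_n.+1 -> X -> R) (alpha : R).

Definition ell (mu : R) (x : X) (i : 'I_n.+1) : R :=
  w i * p i x + mu * (p i x - (1 - alpha)).

Definition Ux (mu : R) (x : X) : R :=
  \big[Num.max/ell mu x ord0]_(i < n.+1) ell mu x i.

Definition is_best (mu : R) (x : X) (i : 'I_n.+1) : bool :=
  [forall j : 'I_n.+1, (ell mu x j < ell mu x i) ||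
     ((ell mu x j == ell mu x i) &&
       ((w j < w i) || ((w j == w i) && (i <= j)%N)))].

(* C^mu(x) (index of the chosen set); such an index exists and is unique *)
Definition Cmu (mu : R) (x : X) : 'I_n.+1 :=
  odflt ord0 [pick i | is_best mu x i].

Definition Dmu (mu : R) (x : X) : bool := 0 <= Ux mu x.

End Defs.

Section Objectives.
Context {d1 d2 : measure_display} {X : measurableType d1}
  {Y : measurableType d2} {R : realType}.
Context (P : probability (X * Y)%type R).
Context (n : nat) (w : 'I_n.+1 -> R) (p : 'I_n.+1 -> X -> R) (alpha : R).

Definition Pi (D : X -> bool) (C : X -> 'I_n.+1) : \bar R :=
  (\int[P]_z ((w (C z.1) * p (C z.1) z.1 * (D z.1)%:R)%:E))%E.

Definition Gobj (D : X -> bool) (C : X -> 'I_n.+1) : \bar R :=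
  (\int[P]_z (((1 - p (C z.1) z.1 - alpha) * (D z.1)%:R)%:E))%E.

End Objectives.

(* Main.v *)
Require Import Defs.
From HB Require Import structures.
From mathcomp Require Import all_boot all_order all_algebra.
From mathcomp Require Import all_classical all_reals all_analysis.
From mathcomp Require Import measurable_realfun lra.
Import Order.TTheory GRing.Theory Num.Theory.
Local Open Scope ring_scope.
Local Open Scope classical_set_scope.


Section Lex.
Context {R : realType}.
Definition lex (a1 a2 b1 b2 : R) (k1 k2 : nat) : bool :=
  (a2 < a1) || ((a2 == a1) && ((b2 < b1) || ((b2 == b1) && (k1 <= k2)%N))).

Lemma lex_refl a b k : lex a a b b k k.
Proof. by rewrite /lex !eqxx leqnn !orbT. Qed.

Lemma lex_total a1 a2 b1 b2 k1 k2 : lex a1 a2 b1 b2 k1 k2 || lex a2 a1 b2 b1 k2 k1.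
Proof.
rewrite /lex; case: (ltgtP a1 a2) => [//|//|_] /=.
case: (ltgtP b1 b2) => [//|//|_] /=.
by case: leqP => // /ltnW ->; rewrite orbT.
Qed.

Lemma lex_trans a1 a2 a3 b1 b2 b3 k1 k2 k3 :
  lex a1 a2 b1 b2 k1 k2 -> lex a2 a3 b2 b3 k2 k3 -> lex a1 a3 b1 b3 k1 k3.
Proof.
rewrite /lex => /orP[h12|/andP[/eqP e12 h12]] /orP[h23|/andP[/eqP e23 h23]].
- by rewrite (lt_trans h23 h12).
- by rewrite e23 h12.
- by rewrite -e12 h23.
- rewrite e23 e12 eqxx ltxx /=.
  move: h12 h23 => /orP[h12|/andP[/eqP f12 h12]] /orP[h23|/andP[/eqP f23 h23]].
  + by rewrite (lt_trans h23 h12).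
  + by rewrite f23 h12.
  + by rewrite -f12 h23.
  + by rewrite f23 f12 eqxx (leq_trans h12 h23) orbT.
Qed.

Lemma lex_anti a1 a2 b1 b2 k1 k2 :
  lex a1 a2 b1 b2 k1 k2 -> lex a2 a1 b2 b1 k2 k1 -> k1 = k2.
Proof.
rewrite /lex => /orP[h|/andP[/eqP e h]].
  by rewrite (lt_gtF h) (gt_eqF h).
rewrite e ltxx eqxx /=; move: h => /orP[h|/andP[/eqP f h]].
  by rewrite (lt_gtF h) (gt_eqF h).
rewrite f ltxx eqxx /= => h'; apply/eqP; by rewrite eqn_leq h h'.
Qed.
End Lex.

Lemma exists_max (T : eqType) (r : rel T) :
  (forall x y, r x y || r y x) -> transitive r ->
  forall (a : T) (s : seq T), exists2 m, m \in a :: s & forall j, j \in a :: s -> r j m.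
Proof.
move=> tot tr a; elim=> [|b s [m ms hm]].
  exists a; first by rewrite inE.
  by move=> j; rewrite inE => /eqP ->; have := tot a a; rewrite orbb.
have /orP[rbm|rmb] := tot b m.
  exists m; first by move: ms; rewrite !inE => /orP[->|->]; rewrite ?orbT.
  move=> j; rewrite !inE => /orP[/eqP->|/orP[/eqP->//|js]].
    by apply: hm; rewrite inE eqxx.
  by apply: hm; rewrite inE js orbT.
exists b; first by rewrite !inE eqxx orbT.
move=> j; rewrite !inE => /orP[/eqP->|/orP[/eqP->|js]].
- by apply: tr rmb; apply: hm; rewrite inE eqxx.
- by have := tot b b; rewrite orbb.
- by apply: tr rmb; apply: hm; rewrite inE js orbT.
Qed.

Section Best.
Context {d1 : measure_display} {X : measurableType d1} {R : realType}.
Context (n : nat) (w : 'I_n.+1 -> R) (p : 'I_n.+1 -> X -> R) (alpha : R).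

Local Notation ell := (ell w p alpha).

Lemma is_bestE mu x i : is_best w p alpha mu x i =
  [forall j, lex (ell mu x i) (ell mu x j) (w i) (w j) i j].
Proof. by []. Qed.

Lemma best_exists mu x : exists i, is_best w p alpha mu x i.
Proof.
pose r (j i : 'I_n.+1) := lex (ell mu x i) (ell mu x j) (w i) (w j) i j.
have tot : forall a b, r a b || r b a by move=> a b; rewrite /r orbC lex_total.
have tr : transitive r by move=> b a c hab hbc; exact: lex_trans hbc hab.
have [m _ hm] := @exists_max _ r tot tr ord0 (enum 'I_n.+1).
exists m; rewrite is_bestE; apply/forallP => j; apply: hm.
by rewrite inE mem_enum orbT.
Qed.

Lemma best_uniq mu x i i' : is_best w p alpha mu x i -> is_best w p alpha mu x i' -> i = i'.
Proof.
rewrite !is_bestE => /forallP/(_ i') h /forallP/(_ i) h'.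
by apply: val_inj; exact: lex_anti h h'.
Qed.

Lemma Cmu_best mu x : is_best w p alpha mu x (Cmu w p alpha mu x).
Proof.
rewrite /Cmu; case: pickP => [i //|H].
by have [i] := best_exists mu x; rewrite H.
Qed.

Lemma CmuE mu x i : (Cmu w p alpha mu x == i) = is_best w p alpha mu x i.
Proof.
apply/eqP/idP => [<-|h]; first exact: Cmu_best.
exact: best_uniq (Cmu_best mu x) h.
Qed.

Lemma ell_le_best mu x j : ell mu x j <= ell mu x (Cmu w p alpha mu x).
Proof.
have := Cmu_best mu x; rewrite is_bestE => /forallP/(_ j).
by rewrite /lex => /orP[/ltW//|/andP[/eqP-> _]].
Qed.

Lemma UxE mu x : Ux w p alpha mu x = ell mu x (Cmu w p alpha mu x).
Proof.
apply/le_anti; apply/andP; split; last exact: le_bigmax.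
by apply/bigmax_leP; split => [|i _]; exact: ell_le_best.
Qed.

End Best.

Section Meas.
Context {d1 : measure_display} {X : measurableType d1} {R : realType}.
Context (n : nat) (w : 'I_n.+1 -> R) (p : 'I_n.+1 -> X -> R) (alpha : R).
Hypothesis mp : forall i, measurable_fun setT (p i).

Lemma mell mu i : measurable_fun setT (fun x => ell w p alpha mu x i).
Proof.
rewrite /ell; apply: measurable_funD; apply: measurable_funM => //;
  try exact: measurable_funB.
Qed.

Lemma mforall (c : 'I_n.+1 -> X -> bool) :
  (forall j, measurable_fun setT (c j)) ->
  measurable_fun setT (fun x => [forall j, c j x]).
Proof.
move=> mc.
have -> : (fun x => [forall j, c j x]) = (fun x => all (fun j => c j x) (enum 'I_n.+1)).
  apply/funext => x; apply/forallP/allP => [h j _|h j]; first exact: h.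
  by apply: h; rewrite mem_enum.
elim: (enum 'I_n.+1) => [|j s IH] /=; first exact: measurable_cst.
exact: measurable_and.
Qed.

Lemma mCeq mu i : measurable_fun setT (fun x => Cmu w p alpha mu x == i).
Proof.
under eq_fun do rewrite CmuE is_bestE.
apply: mforall => j; rewrite /lex.
apply: measurable_or; first exact: measurable_fun_ltr (mell _ _) (mell _ _).
apply: measurable_and; first exact: measurable_fun_eqr (mell _ _) (mell _ _).
exact: measurable_cst.
Qed.

Lemma mcomp mu (g : 'I_n.+1 -> X -> R) : (forall i, measurable_fun setT (g i)) ->
  measurable_fun setT (fun x => g (Cmu w p alpha mu x) x).
Proof.
move=> mg.
have -> : (fun x => g (Cmu w p alpha mu x) x) =
  (fun x => \sum_(i <- enum 'I_n.+1) (if Cmu w p alpha mu x == i then g i x else 0)).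
  apply/funext => x; rewrite big_enum /= (bigD1 (Cmu w p alpha mu x)) //= eqxx.
  by rewrite big1 ?addr0 // => i /negbTE; rewrite eq_sym => ->.
apply: measurable_sum => i; apply: measurable_fun_ifT => //; exact: mCeq.
Qed.
End Meas.

Section Pw.
Context {d1 : measure_display} {X : measurableType d1} {R : realType}.
Context (n : nat) (w : 'I_n.+1 -> R) (p : 'I_n.+1 -> X -> R) (alpha : R).
Hypothesis w0 : forall i, 0 < w i.

Lemma pointwise x mu1 mu2 : (forall i, 0 <= p i x) -> 0 <= mu1 -> mu1 <= mu2 ->
  w (Cmu w p alpha mu2 x) * p (Cmu w p alpha mu2 x) x * (Dmu w p alpha mu2 x)%:R
  <= w (Cmu w p alpha mu1 x) * p (Cmu w p alpha mu1 x) x * (Dmu w p alpha mu1 x)%:R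
  /\
  (1 - p (Cmu w p alpha mu2 x) x - alpha) * (Dmu w p alpha mu2 x)%:R
  <= (1 - p (Cmu w p alpha mu1 x) x - alpha) * (Dmu w p alpha mu1 x)%:R.
Proof.
move=> p0 mu10 mu12.
case: (eqVneq mu1 mu2) => [-> //|ne].
have lt12 : mu1 < mu2 by rewrite lt_neqAle ne.
have h1 := ell_le_best n w p alpha mu1 x (Cmu w p alpha mu2 x).
have h2 := ell_le_best n w p alpha mu2 x (Cmu w p alpha mu1 x).
rewrite /Dmu !UxE.
move: h1 h2; rewrite /ell.
move: (w0 (Cmu w p alpha mu1 x)) (w0 (Cmu w p alpha mu2 x)).
move: (p0 (Cmu w p alpha mu1 x)) (p0 (Cmu w p alpha mu2 x)).
set W1 := w (Cmu w p alpha mu1 x); set W2 := w (Cmu w p alpha mu2 x).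
set P1 := p (Cmu w p alpha mu1 x) x; set P2 := p (Cmu w p alpha mu2 x) x.
move=> P10 P20 W10 W20 h1 h2.
have hP : P1 <= P2 by nra.
have hA : W2 * P2 <= W1 * P1 by nra.
have A10 : 0 <= W1 * P1 by nra.
have A20 : 0 <= W2 * P2 by nra.
case D1: (0 <= W1 * P1 + mu1 * (P1 - (1 - alpha)));
case D2: (0 <= W2 * P2 + mu2 * (P2 - (1 - alpha))); rewrite /= ?mulr1 ?mulr0.
- split; lra.
- split; first lra.
  move/negbT: D2; rewrite -ltNge => D2.
  move: D1 => /idP D1. nra.
- move/negbT: D1; rewrite -ltNge => D1.
  move: D2 => /idP D2. exfalso. nra.
- split; lra.
Qed.
End Pw.

Lemma le_integral_ae d (T : measurableType d) (R : realType) (mu : measure T R)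
  (f g : T -> R) :
  measurable_fun setT f -> measurable_fun setT g ->
  {ae mu, forall z, f z <= g z} ->
  (\int[mu]_z (f z)%:E <= \int[mu]_z (g z)%:E)%E.
Proof.
move=> mf mg hae.
have mf' : measurable_fun setT (fun z => (f z)%:E) by exact/measurable_EFinP.
have mg' : measurable_fun setT (fun z => (g z)%:E) by exact/measurable_EFinP.
rewrite (integralE _ _ (fun z => (f z)%:E)) (integralE _ _ (fun z => (g z)%:E)).
refine (leeB _ _).
- apply: ae_ge0_le_integral => //; try exact: measurable_funepos.
  move: hae; apply: filterS => z h _; rewrite !funeposE.
  by rewrite ge_max le_max lee_fin h /= le_max lexx orbT.
- apply: ae_ge0_le_integral => //; try exact: measurable_funeneg.
  move: hae; apply: filterS => z h _; rewrite !funenegE.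
  by rewrite ge_max le_max lee_fin lerN2 h /= le_max lexx orbT.
Qed.

Lemma ae_ge0_version d1 d2 (X : measurableType d1) (Y : measurableType d2)
  (R : realType) (P : probability (X * Y)%type R) (S : set Y) (q : X -> R) :
  measurable_fun setT q ->
  (forall (A : set X), measurable A ->
     P (A `*` S) = (\int[P]_(z in A `*` setT) (q z.1)%:E)%E) ->
  {ae P, forall z, 0 <= q z.1}.
Proof.
move=> mq hyp.
pose N := [set x | q x < 0].
have mN : measurable N.
  have mb : measurable [set true] by [].
  have := measurable_fun_ltr (measurable_funTS mq) (measurable_cst (0:R)) measurableT mb.
  rewrite setTI; congr measurable; apply/seteqP; split => x /=; by [].
pose D := N `*` [set: Y].
have mD : measurable D by exact: measurableX.
pose F := fun z : X * Y => (q z.1)%:E.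
have mF : measurable_fun D F.
  apply: measurable_funTS; apply/measurable_EFinP.
  exact: measurableT_comp mq measurable_fst.
have H := hyp N mN.
have e1 : (\int[P]_(z in D) F z = - \int[P]_(z in D) (- q z.1)%:E)%E.
  rewrite -integral_ge0N; last first.
    by move=> z [Nz _]; rewrite lee_fin oppr_ge0 ltW.
  by apply: eq_integral => z _; rewrite /F EFinN oppeK.
have i0 : (0 <= \int[P]_(z in D) (- q z.1)%:E)%E.
  by apply: integral_ge0 => z [Nz _]; rewrite lee_fin oppr_ge0 ltW.
have i1 : (\int[P]_(z in D) (- q z.1)%:E = 0)%E.
  apply/le_anti; rewrite i0 andbT.
  have : (0 <= P (N `*` S))%E by exact: measure_ge0.
  by rewrite H e1 oppe_ge0.
have i2 : (\int[P]_(z in D) `|F z| = 0)%E.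
  rewrite -i1; apply: eq_integral => z /set_mem [Nz _].
  by rewrite /F /= ltr0_norm.
have := (ae_eq_integral_abs P mD mF).1 i2.
apply: filterS => z h; case: (leP 0 (q z.1)) => // qneg.
have := h (conj qneg I); rewrite /F => -[] q0.
by move: qneg; rewrite q0 ltxx.
Qed.

Lemma ae_forall_ord d (T : measurableType d) (R : realType) (mu : measure T R)
  (n : nat) (Q : 'I_n.+1 -> T -> Prop) :
  (forall i, {ae mu, forall z, Q i z}) -> {ae mu, forall z, forall i, Q i z}.
Proof.
move=> H.
have : {ae mu, forall z, forall k : nat, forall i : 'I_n.+1, (i : nat) = k -> Q i z}.
  apply: ae_foralln => k; case: (ltnP k n.+1) => hk.
    move: (H (Ordinal hk)); apply: filterS => z h i ik.
    by have -> : i = Ordinal hk by apply: val_inj.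
  apply: aeW => z i ik; exfalso; have := ltn_ord i; by rewrite ik ltnNge hk.
by apply: filterS => z h i; exact: (h i i erefl).
Qed.

Section Main.
Context {d1 : measure_display} {X : measurableType d1} {R : realType}.
Context (n : nat) (w : 'I_n.+1 -> R) (p : 'I_n.+1 -> X -> R) (alpha : R).
Hypothesis mp : forall i, measurable_fun setT (p i).

Lemma mPiX mu : measurable_fun setT
  (fun x => w (Cmu w p alpha mu x) * p (Cmu w p alpha mu x) x * (Dmu w p alpha mu x)%:R).
Proof.
have -> : (fun x => w (Cmu w p alpha mu x) * p (Cmu w p alpha mu x) x * (Dmu w p alpha mu x)%:R)
  = (fun x => (fun i x => w i * p i x * (if 0 <= ell w p alpha mu x i then 1 else 0))
              (Cmu w p alpha mu x) x).
  by apply/funext => x; rewrite /Dmu UxE; case: (0 <= _).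
apply: (@mcomp _ _ _ n w p alpha mp mu (fun i x => w i * p i x * (if 0 <= ell w p alpha mu x i then 1 else 0))) => i.
apply: measurable_funM; first exact: measurable_funM.
apply: measurable_fun_ifT => //; apply: measurable_fun_ler => //; exact: (@mell _ _ _ n w p alpha mp mu i).
Qed.

Lemma mGX mu : measurable_fun setT
  (fun x => (1 - p (Cmu w p alpha mu x) x - alpha) * (Dmu w p alpha mu x)%:R).
Proof.
have -> : (fun x => (1 - p (Cmu w p alpha mu x) x - alpha) * (Dmu w p alpha mu x)%:R)
  = (fun x => (fun i x => (1 - p i x - alpha) * (if 0 <= ell w p alpha mu x i then 1 else 0))
              (Cmu w p alpha mu x) x).
  by apply/funext => x; rewrite /Dmu UxE; case: (0 <= _).
apply: (@mcomp _ _ _ n w p alpha mp mu (fun i x => (1 - p i x - alpha) * (if 0 <= ell w p alpha mu x i then 1 else 0))) => i.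
apply: measurable_funM.
  by apply: measurable_funB => //; apply: measurable_funB.
apply: measurable_fun_ifT => //; apply: measurable_fun_ler => //; exact: (@mell _ _ _ n w p alpha mp mu i).
Qed.
End Main.

Theorem corollary1
  (d1 d2 : measure_display) (X : measurableType d1) (Y : measurableType d2)
  (R : realType) (P : probability (X * Y)%type R)
  (alpha : R) (B : R) (n : nat)
  (S : 'I_n.+1 -> set Y) (w : 'I_n.+1 -> R) (p : 'I_n.+1 -> X -> R) :
  0 < alpha < 1 ->
  injective S ->
  (forall i, measurable (S i)) ->
  (forall i, 0 < w i < B) ->
  (* p i is a version of x |-> P(Y \in S i | X = x) *)
  (forall i, measurable_fun setT (p i)) ->
  (forall i (A : set X), measurable A ->
     P (A `*` S i) = (\int[P]_(z in A `*` setT) (p i z.1)%:E)%E) ->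
  forall mu1 mu2 : R, 0 <= mu1 -> mu1 <= mu2 ->
    (Pi P w p (Dmu w p alpha mu2) (Cmu w p alpha mu2)
       <= Pi P w p (Dmu w p alpha mu1) (Cmu w p alpha mu1))%E /\
    (Gobj P p alpha (Dmu w p alpha mu2) (Cmu w p alpha mu2)
       <= Gobj P p alpha (Dmu w p alpha mu1) (Cmu w p alpha mu1))%E.
Proof.
move=> _ _ _ hw mp hyp mu1 mu2 mu10 mu12.
have w0 : forall i, 0 < w i by move=> i; case/andP: (hw i).
have hae : {ae P, forall z, forall i, 0 <= p i z.1}.
  by apply: ae_forall_ord => i; exact: ae_ge0_version (mp i) (hyp i).
split.
- apply: le_integral_ae.
  + exact: (measurableT_comp (mPiX n w p alpha mp mu2) measurable_fst).
  + exact: (measurableT_comp (mPiX n w p alpha mp mu1) measurable_fst).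
  + move: hae; apply: filterS => z h.
    by have [] := pointwise n w p alpha w0 z.1 mu1 mu2 h mu10 mu12.
- apply: le_integral_ae.
  + exact: (measurableT_comp (mGX n w p alpha mp mu2) measurable_fst).
  + exact: (measurableT_comp (mGX n w p alpha mp mu1) measurable_fst).
  + move: hae; apply: filterS => z h.
    by have [] := pointwise n w p alpha w0 z.1 mu1 mu2 h mu10 mu12.
Qed.
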